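(* Let $b\ge2$ be an integer and let $w$ be a fixed block of $b$-ary digits of length $p\ge1$. For every integer $k\ge0$, $S_w(k)<\infty$, where $S_w(k)=\sum_m 1/m$ and $m$ ranges over the positive integers whose minimal base-$b$ representation (no leading zeros) contains exactly $k$ possibly overlapping occurrences of $w$. *)

(* Defs.v *)
From Stdlib Require Import Reals Arith List.
From Coquelicot Require Import Coquelicot.
Import ListNotations.

(* Base-b digits of m, most significant first, with no leading zeros
   (digits b 0 = []).  The fuel m suffices since m / b < m for b >= 2, m > 0. *)
Fixpoint digits_aux (b fuel m : nat) : list nat :=
  match fuel with
  | O => []
  | S f => if Nat.eqb m 0 then [] else digits_aux b f (m / b) ++ [m mod b]
  end.

Definition digits (b m : nat) : list nat := digits_aux b m m.

Definition occ (w s : list nat) : nat :=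
  length (filter (fun i =>
      if list_eq_dec Nat.eq_dec (firstn (length w) (skipn i s)) w
      then true else false)
    (seq 0 (length s))).

(* Main.v *)
Require Import Defs.
From Stdlib Require Import Reals Arith List Lia Lra.
From Coquelicot Require Import Coquelicot.
Import ListNotations.
Open Scope nat_scope.

Lemma digits_aux_fuel b (Hb : 2 <= b) : forall f1 f2 m, m <= f1 -> m <= f2 ->
  digits_aux b f1 m = digits_aux b f2 m.
Proof.
  induction f1 as [|f1 IH]; intros f2 m H1 H2.
  - assert (m = 0) by lia; subst. destruct f2; reflexivity.
  - destruct f2 as [|f2]; [assert (m = 0) by lia; subst; reflexivity|].
    simpl. destruct (Nat.eqb_spec m 0); [reflexivity|].
    assert (m / b < m) by (apply Nat.div_lt; lia).
    rewrite (IH f2); [reflexivity| lia | lia].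
Qed.

Lemma digits_step b (Hb : 2 <= b) x d : 1 <= x -> d < b ->
  digits b (b * x + d) = digits b x ++ [d].
Proof.
  intros Hx Hd. unfold digits.
  remember (b * x + d) as m.
  destruct m as [|f]; [nia|].
  simpl. rewrite Heqm.
  replace ((b * x + d) / b) with x.
  2:{ rewrite Nat.mul_comm, Nat.div_add_l by lia. rewrite Nat.div_small by lia. lia. }
  replace ((b * x + d) mod b) with d.
  2:{ rewrite Nat.mul_comm, Nat.add_comm, Nat.Div0.mod_add. rewrite Nat.mod_small by lia. lia. }
  rewrite (digits_aux_fuel b Hb f x x) by nia. reflexivity.
Qed.

Fixpoint pad (b p r : nat) : list nat :=
  match p with
  | O => []
  | S p' => pad b p' (r / b) ++ [r mod b]
  end.

Lemma digits_app b (Hb : 2 <= b) p : forall x r, 1 <= x -> r < b ^ p ->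
  digits b (b ^ p * x + r) = digits b x ++ pad b p r.
Proof.
  induction p as [|p IH]; intros x r Hx Hr.
  - simpl in *. assert (r = 0) by lia. subst. rewrite app_nil_r. f_equal. lia.
  - assert (Hdm := Nat.div_mod r b ltac:(lia)).
    assert (Hm : r mod b < b) by (apply Nat.mod_upper_bound; lia).
    assert (Hq : r / b < b ^ p).
    { apply Nat.Div0.div_lt_upper_bound. simpl in Hr. lia. }
    assert (Hp : 1 <= b ^ p) by (apply Nat.neq_0_lt_0, Nat.pow_nonzero; lia).
    replace (b ^ S p * x + r) with (b * (b ^ p * x + r / b) + r mod b).
    2:{ simpl. rewrite Hdm at 3; ring. }
    rewrite digits_step by (auto; nia).
    rewrite IH by lia. simpl. rewrite app_assoc. reflexivity.
Qed.

Definition wval (b : nat) (w : list nat) : nat := fold_left (fun acc d => acc * b + d) w 0.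

Lemma val_pad b (Hb : 2 <= b) w : List.Forall (fun d => d < b) w ->
  pad b (length w) (wval b w) = w /\ wval b w < Nat.pow b (length w).
Proof.
  induction w as [|d w IH] using rev_ind; intros HF.
  - simpl. auto.
  - apply List.Forall_app in HF as [HF1 HF2]. inversion HF2; subst.
    destruct (IH HF1) as [IH1 IH2].
    unfold wval in *. rewrite fold_left_app. simpl.
    rewrite length_app. simpl. rewrite Nat.add_comm. simpl.
    set (v := fold_left (fun acc d0 => acc * b + d0) w 0) in *.
    replace ((v * b + d) / b) with v.
    2:{ rewrite Nat.div_add_l by lia. rewrite Nat.div_small by lia. lia. }
    replace ((v * b + d) mod b) with d.
    2:{ rewrite Nat.add_comm, Nat.Div0.mod_add. rewrite Nat.mod_small by lia. lia. }
    rewrite IH1. split; [reflexivity| nia].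
Qed.
Lemma filter_len_le {A} (f g : A -> bool) l :
  (forall x, f x = true -> g x = true) -> length (filter f l) <= length (filter g l).
Proof.
  intros H; induction l as [|x l IH]; simpl; [lia|].
  destruct (f x) eqn:E; [rewrite (H x E); simpl; lia|].
  destruct (g x); simpl; lia.
Qed.

Lemma filter_seq_shift (P : nat -> bool) st n : forall k,
  length (filter P (seq (st + k) n)) = length (filter (fun j => P (st + j)) (seq k n)).
Proof.
  induction n as [|n IH]; intros k; simpl; [reflexivity|].
  replace (S (st + k)) with (st + S k) by lia.
  destruct (P (st + k)); simpl; rewrite (IH (S k)); reflexivity.
Qed.

Definition isw (w s : list nat) (i : nat) : bool :=
  if list_eq_dec Nat.eq_dec (firstn (length w) (skipn i s)) w then true else false.

Lemma occ_app w s t : occ w s + occ w t <= occ w (s ++ t).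
Proof.
  unfold occ. fold (isw w s). fold (isw w t). fold (isw w (s ++ t)).
  rewrite length_app, seq_app, filter_app, length_app. simpl.
  apply Nat.add_le_mono.
  - apply filter_len_le. intros i. unfold isw.
    destruct (list_eq_dec Nat.eq_dec (firstn (length w) (skipn i s)) w) as [E|E]; [|discriminate].
    intros _. rewrite skipn_app, firstn_app.
    assert (length (firstn (length w) (skipn i s)) = length w) by now rewrite E.
    rewrite length_firstn in H.
    replace (length w - length (skipn i s)) with 0 by lia. simpl. rewrite app_nil_r, E.
    destruct (list_eq_dec Nat.eq_dec w w); congruence.
  - replace (length s) with (length s + 0) at 1 by lia.
    rewrite filter_seq_shift. apply Nat.eq_le_incl. f_equal. apply filter_ext.
    intros j. unfold isw. rewrite skipn_app.
    rewrite (skipn_all2 s) by lia. simpl.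
    replace (length s + j - length s) with j by lia. reflexivity.
Qed.

Lemma occ_self w : 1 <= length w -> 1 <= occ w w.
Proof.
  intros H. unfold occ. destruct (length w) eqn:E; [lia|].
  cbn [seq filter]. rewrite skipn_O, <- E, firstn_all.
  destruct (list_eq_dec Nat.eq_dec w w); [simpl; lia | congruence].
Qed.
Open Scope R_scope.
Fixpoint ps (f : nat -> R) (n : nat) : R :=
  match n with O => 0 | S k => ps f k + f k end.

Lemma ps_le f g n : (forall i, (i < n)%nat -> f i <= g i) -> ps f n <= ps g n.
Proof.
  induction n as [|n IH]; intros H; simpl; [lra|].
  assert (f n <= g n) by (apply H; lia).
  assert (ps f n <= ps g n) by (apply IH; intros; apply H; lia). lra.
Qed.

Lemma ps_scal c f n : ps (fun i => c * f i) n = c * ps f n.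
Proof. induction n as [|n IH]; simpl; [ring| rewrite IH; ring]. Qed.

Lemma ps_split f n k : ps f (n + k) = ps f n + ps (fun i => f (n + i)%nat) k.
Proof.
  induction k as [|k IH]; simpl.
  - rewrite Nat.add_0_r; ring.
  - rewrite Nat.add_succ_r. simpl. rewrite IH. ring.
Qed.

Lemma ps_mono f n m : (forall i, 0 <= f i) -> (n <= m)%nat -> ps f n <= ps f m.
Proof.
  intros Hf H. induction H; [lra|]. simpl. specialize (Hf m). lra.
Qed.

Definition gf (rw r : nat) : R := if Nat.eqb r rw then / 2 else 1.

Lemma ps_gf rw n : ps (gf rw) n = INR n - (if Nat.ltb rw n then / 2 else 0).
Proof.
  induction n as [|n IH]; cbn [ps].
  - destruct (Nat.ltb rw 0) eqn:E; [apply Nat.ltb_lt in E; lia| simpl; ring].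
  - rewrite IH, S_INR. unfold gf.
    destruct (Nat.ltb_spec rw n), (Nat.ltb_spec rw (S n)), (Nat.eqb_spec n rw); try lia; lra.
Qed.
Definition aa (b : nat) (w : list nat) (m : nat) : R :=
  if Nat.ltb 0 m then / 2 ^ (occ w (digits b m)) * / INR m else 0.

Lemma aa_nonneg b w m : 0 <= aa b w m.
Proof.
  unfold aa. destruct (Nat.ltb_spec 0 m); [|lra].
  apply Rmult_le_pos; left; apply Rinv_0_lt_compat; [apply pow_lt; lra| apply lt_0_INR; lia].
Qed.

Lemma inv2pow_le n N : (n <= N)%nat -> / 2 ^ N <= / 2 ^ n.
Proof.
  intros H. apply Rinv_le_contravar; [apply pow_lt; lra|]. apply Rle_pow; [lra|exact H].
Qed.

Lemma block_bound b w (Hb : (2 <= b)%nat) (Hw : (1 <= length w)%nat)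
  (Hdig : List.Forall (fun d => (d < b)%nat) w) m r :
  (1 <= m)%nat -> (r < b ^ length w)%nat ->
  aa b w (b ^ length w * m + r) <= aa b w m * / INR (b ^ length w) * gf (wval b w) r.
Proof.
  intros Hm Hr. set (p := length w) in *. set (B := (b ^ p)%nat) in *.
  assert (HB : (1 <= B)%nat) by (apply Nat.neq_0_lt_0, Nat.pow_nonzero; lia).
  unfold aa.
  destruct (Nat.ltb_spec 0 (B * m + r)); [|nia].
  destruct (Nat.ltb_spec 0 m); [|lia].
  unfold B. rewrite digits_app by auto. fold B.
  set (n' := occ w (digits b m)).
  set (N := occ w (digits b m ++ pad b p r)).
  assert (H1 : / 2 ^ N <= / 2 ^ n' * gf (wval b w) r).
  { unfold gf. destruct (Nat.eqb_spec r (wval b w)) as [E|E].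
    - destruct (val_pad b Hb w Hdig) as [Hp _].
      assert (HN : (n' + 1 <= N)%nat).
      { unfold N, n'. rewrite E. fold p in Hp. rewrite Hp.
        pose proof (occ_app w (digits b m) w). pose proof (occ_self w Hw). lia. }
      eapply Rle_trans; [apply inv2pow_le; exact HN|].
      rewrite pow_add, Rinv_mult. simpl. lra.
    - rewrite Rmult_1_r. apply inv2pow_le. unfold N, n'.
      pose proof (occ_app w (digits b m) (pad b p r)). lia. }
  assert (H2 : / INR (B * m + r) <= / INR B * / INR m).
  { rewrite <- Rinv_mult. apply Rinv_le_contravar.
    - apply Rmult_lt_0_compat; apply lt_0_INR; lia.
    - rewrite <- mult_INR. apply le_INR. lia. }
  replace (/ 2 ^ n' * / INR m * / INR B * gf (wval b w) r)
    with ((/ 2 ^ n' * gf (wval b w) r) * (/ INR B * / INR m)) by ring.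
  apply Rmult_le_compat; auto.
  - left; apply Rinv_0_lt_compat, pow_lt; lra.
  - left; apply Rinv_0_lt_compat, lt_0_INR; lia.
Qed.

Lemma main_rec b w (Hb : (2 <= b)%nat) (Hw : (1 <= length w)%nat)
  (Hdig : List.Forall (fun d => (d < b)%nat) w) M :
  let B := (b ^ length w)%nat in
  ps (aa b w) (B * S M) <= ps (aa b w) B + (1 - / (2 * INR B)) * ps (aa b w) (S M).
Proof.
  intros B.
  assert (HB : (1 <= B)%nat) by (apply Nat.neq_0_lt_0, Nat.pow_nonzero; lia).
  assert (HBR : 1 <= INR B) by (apply (le_INR 1); lia).
  assert (Hc : 0 <= 1 - / (2 * INR B)).
  { assert (/ (2 * INR B) <= / 2) by (apply Rinv_le_contravar; lra). lra. }
  induction M as [|M IH].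
  - rewrite Nat.mul_1_r. change (ps (aa b w) 1) with (0 + aa b w 0).
    assert (H0 : aa b w 0 = 0) by (unfold aa; reflexivity). rewrite H0. lra.
  - rewrite Nat.mul_succ_r, ps_split.
    assert (Hblk : ps (fun i => aa b w (B * S M + i)%nat) B <=
                   (1 - / (2 * INR B)) * aa b w (S M)).
    { eapply Rle_trans.
      - apply ps_le with (g := fun i => aa b w (S M) * / INR B * gf (wval b w) i).
        intros i Hi. apply block_bound; auto; lia.
      - rewrite ps_scal, ps_gf.
        destruct (val_pad b Hb w Hdig) as [_ Hv].
        destruct (Nat.ltb_spec (wval b w) B); [|unfold B in *; lia].
        apply Req_le. field. lra. }
    change (ps (aa b w) (S (S M))) with (ps (aa b w) (S M) + aa b w (S M)).
    rewrite Rmult_plus_distr_l. lra.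
Qed.

Lemma sum_n_ps f n : sum_n f n = ps f (S n).
Proof.
  induction n as [|n IH].
  - rewrite sum_O. simpl. symmetry; apply Rplus_0_l.
  - rewrite sum_Sn, IH. reflexivity.
Qed.

Lemma aa_series b w (Hb : (2 <= b)%nat) (Hw : (1 <= length w)%nat)
  (Hdig : List.Forall (fun d => (d < b)%nat) w) : ex_series (aa b w).
Proof.
  set (B := (b ^ length w)%nat).
  assert (HB : (1 <= B)%nat) by (apply Nat.neq_0_lt_0, Nat.pow_nonzero; lia).
  assert (HBR : 1 <= INR B) by (apply (le_INR 1); lia).
  set (C0 := ps (aa b w) B).
  assert (Hbd : forall N, ps (aa b w) N <= 2 * INR B * C0).
  { intros N. set (X := ps (aa b w) (B * S N)).
    assert (H1 : X <= C0 + (1 - / (2 * INR B)) * ps (aa b w) (S N)) by exact (main_rec b w Hb Hw Hdig N).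
    assert (H2 : ps (aa b w) (S N) <= X) by (apply ps_mono; [apply aa_nonneg| nia]).
    assert (H3 : ps (aa b w) N <= X) by (apply ps_mono; [apply aa_nonneg| nia]).
    assert (Hi : 0 < / (2 * INR B)) by (apply Rinv_0_lt_compat; lra).
    assert (Hc : 0 <= 1 - / (2 * INR B)).
    { assert (/ (2 * INR B) <= / 2) by (apply Rinv_le_contravar; lra). lra. }
    assert (H4 : (1 - / (2 * INR B)) * ps (aa b w) (S N) <= (1 - / (2 * INR B)) * X)
      by (apply Rmult_le_compat_l; auto).
    assert (H5 : X * / (2 * INR B) <= C0).
    { assert (H7 : X <= C0 + (1 - / (2 * INR B)) * X) by lra.
      replace ((1 - / (2 * INR B)) * X) with (X - X * / (2 * INR B)) in H7 by ring.
      lra. }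
    assert (H6 : X <= 2 * INR B * C0).
    { replace X with (X * / (2 * INR B) * (2 * INR B)) by (field; lra).
      rewrite (Rmult_comm (2 * INR B) C0). apply Rmult_le_compat_r; lra. }
    lra. }
  destruct (ex_finite_lim_seq_incr (sum_n (aa b w)) (2 * INR B * C0)) as [l Hl].
  - intros n. rewrite !sum_n_ps. change (ps (aa b w) (S (S n))) with (ps (aa b w) (S n) + aa b w (S n)).
    pose proof (aa_nonneg b w (S n)). lra.
  - intros n. rewrite sum_n_ps. apply Hbd.
  - exists l. exact Hl.
Qed.

Theorem lemma2 (b : nat) (w : list nat) (k : nat)
  (Hb : (2 <= b)%nat) (Hw : (1 <= length w)%nat)
  (Hdig : List.Forall (fun d => (d < b)%nat) w) :
  ex_series (fun m : nat =>
    if andb (Nat.ltb 0 m) (Nat.eqb (occ w (digits b m)) k)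
    then (/ INR m)%R else 0%R).
Proof.
  apply (@ex_series_le R_AbsRing R_CompleteNormedModule) with (b := fun n => 2 ^ k * aa b w n).
  - intros n. unfold norm; simpl. unfold abs; simpl.
    destruct (Nat.ltb_spec 0 n); simpl.
    + destruct (Nat.eqb_spec (occ w (digits b n)) k) as [E|E].
      * assert (0 < INR n) by (apply lt_0_INR; lia).
        rewrite Rabs_pos_eq by (left; apply Rinv_0_lt_compat; lra).
        unfold aa. destruct (Nat.ltb_spec 0 n); [|lia]. rewrite E.
        apply Req_le. field. split; [lra| apply pow_nonzero; lra].
      * rewrite Rabs_R0. apply Rmult_le_pos; [apply pow_le; lra| apply aa_nonneg].
    + rewrite Rabs_R0. apply Rmult_le_pos; [apply pow_le; lra| apply aa_nonneg].
  - apply (ex_series_scal (V := R_NormedModule) (2 ^ k) (aa b w)).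
    apply aa_series; auto.
Qed.
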